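(* If $G$ is a graph of order $n$ with diameter $d$ and a resolving set of size $k$, then $n\leq (dk+1)^{dvc^*(G)}+1$.
   Context: A set $R$ of vertices of a graph $G$ is a resolving set if for each pair $u,v$ of distinct vertices there is $x\in R$ with $d(x,u)\neq d(x,v)$. The distance hypergraph $\mathcal{H}(G)$ has vertex set $V(G)$ and, as hyperedges, all balls $B(v,r)=\{u:d(u,v)\leq r\}$ for $v\in V(G)$ and integers $r\geq0$. For a hypergraph, a vertex set $X$ is shattered if every subset of $X$ equals $e\cap X$ for some hyperedge $e$; the VC dimension is the maximum size of a shattered set. The dual hypergraph has the hyperedges as vertices and, for each original vertex $v$, the hyperedge consisting of the original hyperedges containing $v$. The dual distance-VC dimension $dvc^*(G)$ is the VC dimension of the dual of $\mathcal{H}(G)$. *)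

(* Defs.v *)
From mathcomp Require Import all_boot all_order.
From mathcomp Require Import boolp.
Set Implicit Arguments. Unset Strict Implicit. Unset Printing Implicit Defensive.

Section Graphs.
Variable T : finType.
Variable e : rel T.

Definition simple_graph : Prop := irreflexive e /\ symmetric e.

Definition connected_graph : Prop := forall x y : T, connect e x y.

Fixpoint wball (x : T) (k : nat) : {set T} :=
  match k with
  | 0 => [set x]
  | k'.+1 => wball x k' :|: [set y | [exists z in wball x k', e z y]]
  end.

(* graph distance: least k with y reachable from x in <= k steps
   (for a connected graph this is the usual shortest-path distance,
    which is always <= #|T| - 1). *)
Definition dist (x y : T) : nat :=
  find (fun k => y \in wball x k) (iota 0 #|T|).

Definition diameter : nat := \max_(x : T) \max_(y : T) dist x y.

Definition resolving (R : {set T}) : Prop :=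
  forall u v : T, u != v -> exists2 x, x \in R & dist x u != dist x v.

Definition ball (v : T) (r : nat) : {set T} := [set u | dist u v <= r].

Definition dist_hyperedge (E : {set T}) : Prop := exists v r, E = ball v r.

(* X, a set of hyperedges of H(G) (= vertices of the dual), is shattered in
   the dual hypergraph: every subset Y of X is the trace on X of the dual
   hyperedge {E | v \in E} of some vertex v. *)
Definition dual_shattered (X : {set {set T}}) : Prop :=
  (forall E, E \in X -> dist_hyperedge E) /\
  forall Y : {set {set T}}, Y \subset X ->
    exists v : T, Y = [set E in X | v \in E].

Definition dvc_star : nat :=
  \max_(X : {set {set T}} | `[< dual_shattered X >]) #|X|.
End Graphs.

(* Main.v *)
Require Import Defs.
From mathcomp Require Import all_boot all_order.
From mathcomp Require Import boolp.
Set Implicit Arguments. Unset Strict Implicit. Unset Printing Implicit Defensive.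

Lemma wball_mono (T : finType) (e : rel T) x m k : m <= k -> wball e x m \subset wball e x k.
Proof.
elim: k => [|k IH]; first by rewrite leqn0 => /eqP ->.
rewrite leq_eqVlt => /orP [/eqP -> // | /IH H].
apply: (subset_trans H); exact: subsetUl.
Qed.

Lemma path_wball (T : finType) (e : rel T) x p : path e x p -> last x p \in wball e x (size p).
Proof.
elim/last_ind: p => [_|p z IH]; first by rewrite /= inE.
rewrite rcons_path last_rcons size_rcons => /andP [Hp Hz] /=.
rewrite in_setU; apply/orP; right; rewrite inE.
apply/exists_inP; exists (last x p) => //; exact: IH.
Qed.

Lemma wball_path (T : finType) (e : rel T) x k y : y \in wball e x k ->
  exists p, [/\ path e x p, last x p = y & size p <= k].
Proof.
elim: k y => [|k IH] y /=.
  by rewrite inE => /eqP ->; exists [::].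
rewrite in_setU => /orP [/IH [p [H1 H2 H3]] | ].
  by exists p; split => //; apply: leqW.
rewrite inE => /exists_inP [z /IH [p [H1 H2 H3]] ezy].
exists (rcons p y); rewrite rcons_path last_rcons size_rcons H1 H2 ezy; split => //.
Qed.

Lemma wball_sym (T : finType) (e : rel T) x y k : symmetric e ->
  (y \in wball e x k) -> (x \in wball e y k).
Proof.
move=> sym /wball_path [p [H1 H2 H3]].
have Hr : path e y (rev (belast x p)).
  rewrite -H2 rev_path; apply: sub_path H1 => a b; by rewrite sym.
have Hl : last y (rev (belast x p)) = x.
  clear Hr; case: p H2 {H1 H3} => [|z p] /= H2; by rewrite ?rev_cons ?last_rcons.
have := wball_mono e y (_ : size (rev (belast x p)) <= k).
rewrite size_rev size_belast => /(_ H3) /subsetP; apply.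
by have := path_wball Hr; rewrite Hl size_rev size_belast.
Qed.

Lemma dist_sym (T : finType) (e : rel T) x y : symmetric e -> dist e x y = dist e y x.
Proof.
move=> sym; rewrite /dist; apply: eq_find => i /=.
by apply/idP/idP; apply: wball_sym.
Qed.

Definition shb (U : finType) (F : {set {set U}}) (Y : {set U}) : bool :=
  [forall Z : {set U}, (Z \subset Y) ==> [exists A in F, A :&: Y == Z]].

Lemma shbP (U : finType) (F : {set {set U}}) (Y : {set U}) :
  reflect (forall Z : {set U}, Z \subset Y -> exists2 A, A \in F & A :&: Y = Z) (shb F Y).
Proof.
apply: (iffP forallP) => H Z.
  move=> ZY; move: (H Z); rewrite ZY /= => /exists_inP [A AF /eqP]; by exists A.
apply/implyP => ZY; have [A AF AY] := H Z ZY; apply/exists_inP; exists A => //; exact/eqP.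
Qed.

Lemma shb_sub (U : finType) (F : {set {set U}}) (Y : {set U}) : shb F Y -> exists2 A, A \in F & Y \subset A.
Proof.
move/shbP => /(_ Y (subxx Y)) [A AF AY]; exists A => //; rewrite -AY; exact: subsetIl.
Qed.

Lemma pajor0 (U : finType) (F : {set {set U}}) :
  (forall A, A \in F -> A \subset set0) -> #|F| <= #|[set Y | shb F Y]|.
Proof.
move=> HF; case: (set_0Vmem F) => [-> | [A AF]]; first by rewrite cards0.
have HF0 : F \subset [set set0].
  apply/subsetP => B BF; rewrite inE; apply/eqP; apply/eqP; rewrite -subset0; exact: HF.
apply: (leq_trans (subset_leq_card HF0)); rewrite cards1 card_gt0; apply/set0Pn.
exists set0; rewrite inE; apply/shbP => Z; rewrite subset0 => /eqP ->.
by exists A => //; rewrite setI0.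
Qed.

Lemma setD1I (U : finType) (a : U) (B Y : {set U}) : a \notin Y -> (B :\ a) :&: Y = B :&: Y.
Proof.
move=> aY; apply/setP => x; rewrite !inE; case: (x =P a) => [->|] /=; last by [].
by rewrite (negbTE aY) !andbF.
Qed.

Lemma pajor (U : finType) n : forall (S : {set U}) (F : {set {set U}}), #|S| <= n ->
  (forall A, A \in F -> A \subset S) -> #|F| <= #|[set Y | shb F Y]|.
Proof.
elim: n => [|n IH] S F HS HF.
  apply: pajor0 => A /HF; move: HS; rewrite leqn0 => /eqP /cards0_eq ->; done.
case: (set_0Vmem S) => [S0 | [a aS]].
  by apply: pajor0 => A /HF; rewrite S0.
set P := [set A : {set U} | a \in A].
set Fin := F :&: P. set Fout := F :\: P.
set G := [set A :\ a | A in Fin].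
set F1 := Fout :|: G. set F2 := Fout :&: G.
have cG : #|G| = #|Fin|.
  apply: card_in_imset => A B; rewrite !inE => /andP [_ aA] /andP [_ aB] E.
  by rewrite -(setD1K aA) -(setD1K aB) E.
have cF : #|F| = #|F1| + #|F2| by rewrite cardsUI cG addnC cardsID.
have HS' : #|S :\ a| <= n by move: HS; rewrite (cardsD1 a S) aS.
have F1S : forall A, A \in F1 -> A \subset S :\ a.
  move=> A; rewrite in_setU => /orP [|/imsetP [B BF ->]].
    rewrite !inE => /andP [aA AF]; apply/subsetP => x xA; rewrite !inE.
    rewrite (subsetP (HF A AF) x xA) andbT; apply: contraNneq aA => <-; done.
  move: BF; rewrite inE => /andP [BF _]; apply: setSD; exact: HF.
have F2S : forall A, A \in F2 -> A \subset S :\ a.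
  move=> A; rewrite in_setI => /andP [A1 A2]; apply: F1S; by rewrite in_setU A1.
have IH1 := IH _ F1 HS' F1S.
have IH2 := IH _ F2 HS' F2S.
set H1 := [set Y | shb F1 Y]. set H2 := [set Y | shb F2 Y].
have naY : forall (F' : {set {set U}}) (Y : {set U}), (forall A, A \in F' -> A \subset S :\ a) -> shb F' Y -> a \notin Y.
  move=> F' Y HF' /shb_sub [A /HF' AS YA]; apply/negP => aY.
  by move: (subsetP AS a (subsetP YA a aY)); rewrite !inE eqxx.
have cH2 : #|[set a |: Y | Y in H2]| = #|H2|.
  apply: card_in_imset => Y1 Y2; rewrite !inE => /(naY _ _ F2S) n1 /(naY _ _ F2S) n2 E.
  by rewrite -(setU1K n1) -(setU1K n2) E.
have sub1 : H1 :|: [set a |: Y | Y in H2] \subset [set Y | shb F Y].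
  apply/subsetP => Y; rewrite in_setU => /orP [|/imsetP [Y' Y'H ->]].
    rewrite !inE => Ysh; have aY := naY _ _ F1S Ysh.
    apply/shbP => Z /(shbP _ _ Ysh) [A AF1 AZ].
    move: AF1 AZ; rewrite in_setU => /orP [|/imsetP [B BF ->]].
      by rewrite inE => /andP [_ AF] AZ; exists A.
    move: BF; rewrite inE => /andP [BF _] AZ; exists B => //; by rewrite -(setD1I _ aY).
  move: Y'H; rewrite !inE => Ysh; have aY := naY _ _ F2S Ysh.
  apply/shbP => Z ZY.
  have ZY' : Z :\ a \subset Y'.
    apply/subsetP => x; rewrite !inE => /andP [xa xZ].
    by move: (subsetP ZY x xZ); rewrite !inE (negbTE xa).
  have [B BF2 BZ] := shbP _ _ Ysh _ ZY'.
  move: BF2; rewrite in_setI => /andP [Bout /imsetP [C CF CB]].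
  move: Bout; rewrite !inE => /andP [aB BF].
  move: CF; rewrite !inE => /andP [CF aC].
  have aBC : a |: B = C by rewrite CB setD1K.
  case aZ : (a \in Z).
    exists C => //; rewrite -aBC -(setD1K aZ) -BZ.
    apply/setP => x; rewrite !inE; case: (x =P a) => //= ->; by rewrite (negbTE aY).
  exists B => //.
  have -> : B :&: (a |: Y') = B :&: Y'.
    apply/setP => x; rewrite !inE; case: (x =P a) => [->|] /=; by rewrite ?(negbTE aB).
  rewrite BZ; apply/setP => x; rewrite !inE; case: (x =P a) => [->|] /=; by rewrite ?aZ.
rewrite cF; apply: leq_trans (subset_leq_card sub1).
have disj : H1 :&: [set a |: Y | Y in H2] = set0.
  apply/setP => Y; rewrite !inE; apply/negP => /andP [Y1 /imsetP [Y' _ EY]].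
  by move: (naY _ _ F1S Y1); rewrite EY setU11.
apply: leq_trans (leq_add IH1 IH2) _.
by rewrite -/H1 -/H2 -cH2 -cardsUI disj cards0 addn0.
Qed.

Lemma card_level (U : finType) (X : {set U}) D :
  #|[set Y : {set U} | (Y \subset X) && (#|Y| <= D)]| <= (#|X| + 1) ^ D.
Proof.
elim: D => [|D IH].
  rewrite expn0; apply: (leq_trans (subset_leq_card (_ : _ \subset [set set0]))).
    apply/subsetP => Y; rewrite !inE leqn0 => /andP [_ /eqP /cards0_eq ->]; done.
  by rewrite cards1.
set L := [set Y : {set U} | (Y \subset X) && (#|Y| <= D)].
have sub : [set Y : {set U} | (Y \subset X) && (#|Y| <= D.+1)] \subset
   L :|: [set p.2 |: p.1 | p in setX L X].
  apply/subsetP => Y; rewrite !inE => /andP [YX]; rewrite leq_eqVlt ltnS => /orP [/eqP cY|->]; last first.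
    by rewrite YX.
  apply/orP; right.
  have : 0 < #|Y| by rewrite cY.
  rewrite card_gt0 => /set0Pn [x xY].
  apply/imsetP; exists (Y :\ x, x); last by rewrite /= setD1K.
  rewrite !inE (subsetP YX x xY) andbT; apply/andP; split.
    apply: subset_trans YX; exact: subsetDl.
  by move: cY; rewrite (cardsD1 x) xY add1n => [[->]].
apply: leq_trans (subset_leq_card sub) _.
apply: leq_trans (leq_card_setU _ _) _.
apply: leq_trans (leq_add (leqnn _) (leq_imset_card _ _)) _.
rewrite cardsX expnSr.
have := IH; rewrite -/L => IH'.
apply: leq_trans _ (leq_mul IH' (leqnn (#|X| + 1))).
by rewrite mulnDr muln1 addnC.
Qed.


Lemma eq_from_thresholds (a b d : nat) : a <= d -> b <= d ->
  (forall r, r < d -> (a <= r) = (b <= r)) -> a = b.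
Proof.
move=> ad bd H; apply/eqP; rewrite eqn_leq; apply/andP; split.
  case: (ltnP b d) => bd'; first by rewrite H // leqnn.
  exact: leq_trans ad bd'.
case: (ltnP a d) => ad'; first by rewrite -H // leqnn.
exact: leq_trans bd ad'.
Qed.

Theorem proposition4 (T : finType) (e : rel T) (n d k : nat) (R : {set T}) :
  simple_graph e -> connected_graph e ->
  #|T| = n -> diameter e = d ->
  resolving e R -> #|R| = k ->
  n <= (d * k + 1) ^ dvc_star e + 1.
Proof.
move=> [irr sym] _ <- dE Rres <-.
set X := [set ball e p.1 (nat_of_ord p.2) | p : T * 'I_d in setX R [set: 'I_d]].
pose tr (v : T) := [set E in X | v \in E].
set F := [set tr v | v in [set: T]].
have dle : forall u x, dist e u x <= d.
  move=> u x; rewrite -dE /diameter.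
  apply: (leq_trans _ (leq_bigmax u)).
  exact: leq_bigmax.
have trinj : injective tr.
  move=> u v Huv; apply/eqP; apply: contraT => neq.
  have [x xR /eqP H] := Rres u v neq; exfalso; apply: H.
  rewrite (dist_sym _ _ sym) (dist_sym _ v sym).
  apply: eq_from_thresholds; rewrite ?dle // => r rd.
  have Hb : ball e x r \in X.
    by apply/imsetP; exists (x, Ordinal rd); rewrite // !inE xR.
  have : (ball e x r \in tr u) = (ball e x r \in tr v) by rewrite Huv.
  by rewrite !inE Hb /=.
have cF : #|F| = #|T| by rewrite card_imset // cardsT.
have FX : forall A, A \in F -> A \subset X.
  move=> A /imsetP [v _ ->]; apply/subsetP => E; rewrite inE => /andP [].
  done.
have Hp := pajor (leqnn #|X|) FX.
have Hsub : [set Y | shb F Y] \subset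
    [set Y : {set {set T}} | (Y \subset X) && (#|Y| <= dvc_star e)].
  apply/subsetP => Y; rewrite !inE => Ysh.
  have YX : Y \subset X.
    have [A AF YA] := shb_sub Ysh; exact: subset_trans YA (FX A AF).
  rewrite YX /=; rewrite /dvc_star.
  apply: (@leq_bigmax_cond _ _ (fun X : {set {set T}} => #|X|)); apply: asboolT; split.
    move=> E /(subsetP YX) /imsetP [p _ ->]; by exists p.1, p.2.
  move=> Z /(shbP _ _ Ysh) [A /imsetP [v _ ->] AZ]; exists v.
  rewrite -AZ; apply/setP => E; rewrite !inE.
  case EY : (E \in Y); last by rewrite andbF.
  by rewrite (subsetP YX E EY) andbT.
have cX : #|X| <= d * #|R|.
  apply: leq_trans (leq_imset_card _ _) _; by rewrite cardsX cardsT card_ord mulnC.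
rewrite -cF; apply: leq_trans (leq_addr 1 _).
apply: (leq_trans Hp); apply: (leq_trans (subset_leq_card Hsub)).
apply: (leq_trans (card_level X (dvc_star e))).
case: (dvc_star e) => [//|D]; by rewrite leq_exp2r // leq_add2r.
Qed.
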